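(* Let $\mathbf{S} = [s_{ij}] \in \mathbb{R}^{m_q \times m}$ be the similarity matrix between a query vector set $\mathbf{Q}=\{\mathbf{q}_1,\dots,\mathbf{q}_{m_q}\}$ and a target vector set $\mathbf{T}=\{\mathbf{t}_1,\dots,\mathbf{t}_m\}$, with entries $s_{ij}\in[0,1]$, and let $s_{\min} = \min_{i,j} s_{ij}$. Let $\hat{\mathbf{S}} = [\hat S_{ij}]$ be the estimated similarity matrix obtained from $L \in \mathbb{Z}^+$ hash functions of a locality-sensitive hashing family (so that each estimated entry $\hat S_{ij}$ is distributed as $L^{-1}\mathcal{B}(s_{ij}, L)$, i.e. $L\hat S_{ij}$ is binomial with $L$ trials and success probability $s_{ij}$). Let $\tau_2 \in (0, s_{\min})$ and $\Delta_2 = s_{\min} - \tau_2$. Then $$\Pr\big[\sigma(\hat{\mathbf{S}}) \leq s_{\min} - \Delta_2\big] \leq m_q m\, \xi^L, \qquad \text{where } \xi = \left(\frac{s_{\min}(1-\tau_2)}{\tau_2(1-s_{\min})}\right)^{\tau_2}\left(\frac{1-s_{\min}}{1-\tau_2}\right),$$ and $\sigma(\mathbf{A}) = \min\big(\min_i \max_j a_{ij}, \min_j \max_i a_{ij}\big)$ for a matrix $\mathbf{A}=[a_{ij}] \in \mathbb{R}^{m_q\times m}$.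
   Context: A locality-sensitive hash function $h$ satisfies $\Pr(h(\mathbf{a})=h(\mathbf{b})) = \operatorname{sim}(\mathbf{a},\mathbf{b}) \in [0,1]$. With $L$ such hash functions, the estimated similarity of a pair of vectors is the fraction of the $L$ hash functions on which they collide, hence a scaled binomial $L^{-1}\mathcal{B}(\operatorname{sim}, L)$. Vectors are $L2$-normalized and $\operatorname{sim}(\mathbf{q},\mathbf{v}) = \mathbf{q}^T\mathbf{v}$. *)

(* Defs.v *)
From HB Require Import structures.
From mathcomp Require Import all_boot all_order all_algebra.
From mathcomp Require Import all_classical all_reals all_analysis.
Set Implicit Arguments. Unset Strict Implicit. Unset Printing Implicit Defensive.
Import Order.TTheory GRing.Theory Num.Theory.
Local Open Scope ring_scope.

(* minimum / maximum of a finite nonempty family, defaulting to the first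
   value (so that the result is an actual element of the family);
   for an empty family the value (0) is irrelevant. *)
Definition fmin {R : realDomainType} {I : finType} (F : I -> R) : R :=
  \big[Num.min/head 0 [seq F i | i <- enum I]]_(i : I) F i.
Definition fmax {R : realDomainType} {I : finType} (F : I -> R) : R :=
  \big[Num.max/head 0 [seq F i | i <- enum I]]_(i : I) F i.

Definition sigma {R : realDomainType} {p q : nat} (A : 'M[R]_(p, q)) : R :=
  Num.min (fmin (fun i => fmax (fun j => A i j)))
          (fmin (fun j => fmax (fun i => A i j))).

(* Main.v *)
Require Import Defs.
From HB Require Import structures.
From mathcomp Require Import all_boot all_order all_algebra.
From mathcomp Require Import all_classical all_reals all_analysis.
From mathcomp Require Import ring lra.
Import Order.TTheory GRing.Theory Num.Theory.
Local Open Scope classical_set_scope.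
Local Open Scope ring_scope.
Section H.
Context {R : realDomainType} {I : finType}.

Lemma head_map (F : I -> R) (i1 : I) : exists i0, head 0 [seq F i | i <- enum I] = F i0.
Proof.
case E: (enum I) => [|i0 s] /=; last by exists i0.
by have := mem_enum I i1; rewrite E.
Qed.

Lemma fmin_leP (F : I -> R) t (i1 : I) : fmin F <= t <-> exists i, F i <= t.
Proof.
split; last first.
  by case=> i Hi; rewrite /fmin; apply: (le_trans _ Hi); exact: bigmin_le.
move=> h; case: (pselect (exists i, F i <= t)) => // /forallNP H; exfalso.
have : t < fmin F.
  rewrite /fmin; apply/bigmin_gtP; split.
    have [i0 ->] := head_map F i1; rewrite ltNge; apply/negP; exact: H.
  by move=> i _; rewrite ltNge; apply/negP; exact: H.
by rewrite ltNge h.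
Qed.

Lemma fmax_leP (G : I -> R) t (i1 : I) : fmax G <= t <-> forall j, G j <= t.
Proof.
split; first by move/bigmax_leP => [_ H] j; exact: H.
move=> H; apply/bigmax_leP; split; last by move=> j _; exact: H.
have [i0 ->] := head_map G i1; exact: H.
Qed.
End H.

Lemma sigma_leP {R : realDomainType} p q (A : 'M[R]_(p, q)) t (i1 : 'I_p) (j1 : 'I_q) :
  sigma A <= t <-> (exists i, forall j, A i j <= t) \/ (exists j, forall i, A i j <= t).
Proof.
rewrite /sigma ge_min; split.
  case/orP => H.
    have [i Hi] := iffLR (fmin_leP _ _ i1) H.
    by left; exists i; exact: (iffLR (fmax_leP _ _ j1) Hi).
  have [j Hj] := iffLR (fmin_leP _ _ j1) H.
  by right; exists j; exact: (iffLR (fmax_leP _ _ i1) Hj).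
case=> [[i H]|[j H]]; apply/orP.
  by left; apply: (iffRL (fmin_leP _ _ i1)); exists i; apply: (iffRL (fmax_leP _ _ j1)).
by right; apply: (iffRL (fmin_leP _ _ j1)); exists j; apply: (iffRL (fmax_leP _ _ i1)).
Qed.

Lemma in_bigsetU {T : Type} {I : eqType} (r : seq I) (F : I -> set T) x :
  (\big[setU/set0]_(i <- r) F i) x <-> exists2 i, i \in r & F i x.
Proof.
elim: r => [|a r IH]; first by rewrite big_nil; split=> // -[].
rewrite big_cons; split.
  case=> [h|/IH [i ir h]]; first by exists a => //; rewrite inE eqxx.
  by exists i => //; rewrite inE ir orbT.
case=> i; rewrite inE => /orP [/eqP ->|ir] h; first by left.
by right; apply/IH; exists i.
Qed.

Lemma in_bigsetI {T : Type} {I : eqType} (r : seq I) (F : I -> set T) x :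
  (\big[setI/setT]_(i <- r) F i) x <-> forall i, i \in r -> F i x.
Proof.
elim: r => [|a r IH]; first by rewrite big_nil; split=> // _ i.
rewrite big_cons; split.
  case=> h /IH h' i; rewrite inE => /orP [/eqP ->|ir] //; exact: h'.
move=> h; split; first by apply: h; rewrite inE eqxx.
by apply/IH => i ir; apply: h; rewrite inE ir orbT.
Qed.

Lemma union_bound d {R : realType} {T : measurableType d} (mu : {measure set T -> \bar R})
  {I : Type} (r : seq I) (F : I -> set T) :
  (forall i, measurable (F i)) ->
  (mu (\big[setU/set0]_(i <- r) F i) <= \sum_(i <- r) mu (F i))%E.
Proof.
move=> mF; elim: r => [|a r IH]; first by rewrite !big_nil measure0.
rewrite !big_cons; apply: le_trans (measureU2 _ _ _) _ => //.
  by apply: bigsetU_measurable.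
exact: leeD.
Qed.

Lemma chernoff_real (R : realType) (L : nat) (s smin tau : R) (P : 'I_L.+1 -> bool) :
  0 < tau -> tau < smin -> smin <= s -> s <= 1 -> smin < 1 ->
  (forall k : 'I_L.+1, P k -> k%:R <= tau * L%:R) ->
  \sum_(k < L.+1) s ^+ k * (1 - s) ^+ (L - k) *+ 'C(L, k) * (P k)%:R <=
  (powR (smin * (1 - tau) / (tau * (1 - smin))) tau * ((1 - smin) / (1 - tau))) ^+ L.
Proof.
move=> t0 ts ss s1 sm1 HP.
set mu := smin * (1 - tau) / (tau * (1 - smin)).
have d0 : 0 < tau * (1 - smin) by apply: mulr_gt0; lra.
have mu1 : 1 <= mu by rewrite /mu ler_pdivlMr // mul1r; nra.
have mu0 : 0 < mu by lra.
set c := powR mu tau.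
have c0 : 0 <= c by apply: powR_ge0.
have term0 k : 0 <= s ^+ k * (1 - s) ^+ (L - k) *+ 'C(L, k).
  by apply: mulrn_wge0; apply: mulr_ge0; apply: exprn_ge0; lra.
apply: (@le_trans _ _ (\sum_(k < L.+1) s ^+ k * (1 - s) ^+ (L - k) *+ 'C(L, k) * (c ^+ L / mu ^+ k))).
  apply: ler_sum => k _; case Pk: (P k).
    rewrite mulr1 -[X in X <= _]mulr1; apply: ler_wpM2l => //.
    rewrite ler_pdivlMr ?exprn_gt0 // mul1r.
    rewrite -powR_mulrn; last lra.
    rewrite -powR_mulrn // /c -powRrM; apply: ler_powR => //.
    exact: HP.
  rewrite mulr0; apply: mulr_ge0 => //; apply: divr_ge0; apply: exprn_ge0 => //; lra.
have -> : \sum_(k < L.+1) s ^+ k * (1 - s) ^+ (L - k) *+ 'C(L, k) * (c ^+ L / mu ^+ k)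
   = c ^+ L * (1 - s + s / mu) ^+ L.
  rewrite exprDn mulr_sumr; apply: eq_bigr => k _.
  rewrite (expr_div_n s mu).
  move: (s ^+ k) ((1 - s) ^+ (L - k)) (c ^+ L) ((mu ^+ k)^-1) 'C(L, k) => a b f g n.
  rewrite !mulrnAl !mulrnAr; congr (_ *+ _); ring.
rewrite exprMn; apply: ler_wpM2l; first exact: exprn_ge0.
have u1 : mu^-1 <= 1 by rewrite invf_le1.
have u0 : 0 < mu^-1 by rewrite invr_gt0.
apply: lerXn2r; rewrite ?inE.
- apply: addr_ge0; first lra. by apply: divr_ge0; lra.
- apply: divr_ge0; lra.
have -> : (1 - smin) / (1 - tau) = 1 - smin + smin / mu.
  rewrite /mu; field; apply/andP; split; [lra| apply/andP; split; [lra|]].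
  apply/andP; split; lra.
move: u1 u0; move: (mu^-1) => u u1 u0.
have : 0 <= (s - smin) * (1 - u) by apply: mulr_ge0; lra.
nra.
Qed.

Lemma chernoff_all (R : realType) (L : nat) (s smin tau : R) (P : 'I_L.+1 -> bool) :
  (0 < L)%N -> 0 < tau -> tau < smin -> smin <= s -> s <= 1 -> smin <= 1 ->
  (forall k : 'I_L.+1, P k -> k%:R <= tau * L%:R) ->
  \sum_(k < L.+1) s ^+ k * (1 - s) ^+ (L - k) *+ 'C(L, k) * (P k)%:R <=
  (powR (smin * (1 - tau) / (tau * (1 - smin))) tau * ((1 - smin) / (1 - tau))) ^+ L.
Proof.
move=> L0 t0 ts ss s1 sm1 HP.
have [sm1'|sm1'] := ltP smin 1; first exact: chernoff_real.
have e1 : smin = 1 by apply: le_anti; rewrite sm1.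
have es : s = 1 by apply: le_anti; rewrite s1 -e1.
rewrite e1 es subrr mul0r mulr0 expr0n gtn_eqF //.
rewrite big1 // => k _.
have [kL|kL] := ltnP k L.
  by rewrite expr0n gtn_eqF ?subn_gt0 // mulr0 mul0rn mul0r.
case Pk: (P k); last by rewrite mulr0.
have := HP k Pk.
have kL' : k = L :> nat by apply/eqP; rewrite eqn_leq kL -ltnS ltn_ord.
rewrite kL' => h.
have L0' : (0 : R) < L%:R by rewrite ltr0n.
exfalso; nra.
Qed.

Theorem lemma3 (R : realType) (d : measure_display) (Omega : measurableType d)
    (P : probability Omega R) (mq m : nat) (S : 'M[R]_(mq, m)) (smin : R)
    (L : nat) (K : 'I_mq -> 'I_m -> {RV P >-> nat}) (tau2 : R) :
  (0 < mq)%N -> (0 < m)%N ->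
  (forall i j, 0 <= S i j <= 1) ->
  (forall i j, smin <= S i j) -> (exists i j, S i j = smin) ->
  (0 < L)%N ->
  (forall i j, distribution P (K i j) = binomial_prob L (S i j)) ->
  0 < tau2 < smin ->
  let Delta2 := smin - tau2 in
  let xi := powR (smin * (1 - tau2) / (tau2 * (1 - smin))) tau2
            * ((1 - smin) / (1 - tau2)) in
  (P [set w | (sigma (\matrix_(i, j) ((K i j w)%:R / L%:R)) <= smin - Delta2)%R]
    <= ((mq * m)%:R * xi ^+ L)%:E)%E.
Proof.
move=> mq0 m0 S01 Smin Sex L0 Hdist /andP [t0 ts]; cbv zeta.
set xi := powR _ _ * _.
have smin1 : smin <= 1.
  by case: Sex => i [j <-]; case/andP: (S01 i j).
have -> : smin - (smin - tau2) = tau2 by lra.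
pose i1 : 'I_mq := Ordinal mq0.
pose j1 : 'I_m := Ordinal m0.
pose U0 : set nat := [set k : nat | k%:R / L%:R <= tau2].
pose B i j := K i j @^-1` U0.
have mB i j : measurable (B i j) by apply: measurable_funPTI.
set E := [set w | _].
have EE : E = (\big[setU/set0]_(i <- enum 'I_mq) \big[setI/setT]_(j <- enum 'I_m) B i j)
   `|` (\big[setU/set0]_(j <- enum 'I_m) \big[setI/setT]_(i <- enum 'I_mq) B i j).
  apply/seteqP; split => w.
    rewrite /E /= => /(iffLR (sigma_leP _ _ _ _ i1 j1)) [[i H]|[j H]].
      left; apply/in_bigsetU; exists i; first by rewrite mem_enum.
      apply/in_bigsetI => j _; have := H j; rewrite mxE; exact.
    right; apply/in_bigsetU; exists j; first by rewrite mem_enum.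
    apply/in_bigsetI => i _; have := H i; rewrite mxE; exact.
  rewrite /E /= => -[/in_bigsetU [i _ /in_bigsetI H]|/in_bigsetU [j _ /in_bigsetI H]];
    apply: (iffRL (sigma_leP _ _ _ _ i1 j1)).
    by left; exists i => j; rewrite mxE; apply: H; rewrite mem_enum.
  by right; exists j => i; rewrite mxE; apply: H; rewrite mem_enum.
have mE : measurable E.
  rewrite EE; apply: measurableU; apply: bigsetU_measurable => a _;
  by apply: bigsetI_measurable => b _.
pose U := \big[setU/set0]_(p <- index_enum ('I_mq * 'I_m)%type) B p.1 p.2.
have EU : E `<=` U.
  move=> w; rewrite EE => -[/in_bigsetU [i _ /in_bigsetI H]|/in_bigsetU [j _ /in_bigsetI H]].
    apply/in_bigsetU; exists (i, j1); first by rewrite mem_index_enum.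
    by apply: H; rewrite mem_enum.
  apply/in_bigsetU; exists (i1, j); first by rewrite mem_index_enum.
  by apply: H; rewrite mem_enum.
have mU : measurable U by apply: bigsetU_measurable => p _.
apply: (le_trans (le_measure _ _ _ EU)); rewrite ?inE //.
apply: le_trans; first exact: (@union_bound _ _ _ P _ (index_enum ('I_mq * 'I_m)%type) (fun p => B p.1 p.2) (fun p => mB p.1 p.2)).
have bound : forall i j, (P (B i j) <= (xi ^+ L)%:E)%E.
  move=> i j.
  have -> : P (B i j) = distribution P (K i j) U0 by [].
  rewrite Hdist.
  case/andP: (S01 i j) => p0 p1.
  rewrite (@binomial_probE _ L (S i j) p0 p1).
  under eq_bigr do rewrite diracE -EFinM.
  rewrite sumEFin lee_fin.
  have HP : forall k : 'I_L.+1, (nat_of_ord k \in U0) -> k%:R <= tau2 * L%:R.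
    move=> k; rewrite inE /U0 /= ler_pdivrMr ?ltr0n //.
  have -> : \sum_(k < L.+1) (@bin_prob _ L (S i j) p0 p1 k)%:num * (nat_of_ord k \in U0)%:R =
    \sum_(k < L.+1) S i j ^+ k * (1 - S i j) ^+ (L - k) *+ 'C(L, k) * (nat_of_ord k \in U0)%:R.
    by apply: eq_bigr.
  rewrite /xi.
  exact: (@chernoff_all _ L (S i j) smin tau2 (fun k : 'I_L.+1 => (nat_of_ord k) \in U0) L0 t0 ts (Smin i j) p1 smin1 HP).
apply: (@le_trans _ _ (\sum_(p : 'I_mq * 'I_m) (xi ^+ L)%:E)%E).
  by apply: lee_sum => p _; exact: bound p.1 p.2.
rewrite sumEFin lee_fin sumr_const card_prod !card_ord.
by rewrite mulr_natl.
Qed.
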